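(* $R_5(VS)>180$ and $R_6(VS)>333$: there is a 5-coloring of $[180]$ and a 6-coloring of $[333]$ in each of which no two integers of the same color differ by a positive perfect square.
   Context: For $n\in\mathbb{N}$, $[n]=\{1,\dots,n\}$; a $c$-coloring of $[n]$ is a function $[n]\to[c]$. $R_c(VS)$ (the van der Square number) is the least positive integer $n$ such that every $c$-coloring of $[n]$ contains integers $a<b$ in $[n]$ of the same color with $b-a=x^2$ for some positive integer $x$. *)

(* Defs.v *)
From mathcomp Require Import all_boot.
Set Implicit Arguments. Unset Strict Implicit. Unset Printing Implicit Defensive.

(* A c-coloring of [n] = {1,...,n}: a function into 'I_c (colors 0..c-1,
   i.e. [c] shifted); only its values on 1..n matter. *)
Definition has_mono_square (c : nat) (n : nat) (col : nat -> 'I_c) : Prop :=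
  exists a b x : nat,
    [/\ 1 <= a, a < b, b <= n, 0 < x & (b - a = x ^ 2 /\ col a = col b)].

(* Main.v *)
Require Import Defs.
From mathcomp Require Import all_boot.

Lemma crit c n m (col : nat -> 'I_c) : n < m ^ 2 ->
  all (fun a => all (fun x => (a + x ^ 2 <= n) ==> (col a != col (a + x ^ 2)))
    (iota 1 m)) (iota 1 n) -> ~ has_mono_square n col.
Proof.
move=> hm H [a [b [x [h1 hab hbn hx [he hc]]]]].
have eb : b = a + x ^ 2 by rewrite -he subnKC // ltnW.
have hxm : x < m.
  rewrite ltnNge; apply/negP => hmx.
  have : m ^ 2 <= x ^ 2 by rewrite leq_exp2r.
  rewrite -he => h; have := leq_ltn_trans h (leq_ltn_trans (leq_subr a b) (leq_ltn_trans hbn hm)).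
  by rewrite ltnn.
move/allP: H => /(_ a); rewrite mem_iota h1 /= add1n ltnS (leq_trans (ltnW hab) hbn).
move=> /(_ isT) /allP /(_ x); rewrite mem_iota hx add1n ltnS (ltnW hxm).
by move=> /(_ isT); rewrite -eb hbn hc eqxx.
Qed.

Definition s5 : seq nat := [:: 0; 2; 1; 4; 2; 3; 2; 1; 3; 4; 3; 4; 2; 1; 0; 1; 3; 4; 3; 0; 1; 0; 4; 2; 4; 2; 1; 0; 1; 3; 4; 3; 0; 1; 0; 4; 2; 4; 2; 1; 0; 1; 3; 4; 2; 0; 1; 0; 4; 2; 3; 2; 1; 0; 1; 3; 4; 2; 0; 1; 0; 4; 3; 4; 2; 1; 0; 1; 3; 4; 3; 0; 1; 0; 4; 2; 4; 2; 1; 0; 1; 3; 4; 3; 0; 1; 0; 4; 3; 4; 2; 1; 0; 1; 3; 4; 2; 0; 1; 0; 4; 3; 4; 2; 1; 0; 1; 3; 4; 3; 0; 1; 0; 4; 2; 4; 2; 1; 0; 1; 3; 4; 3; 0; 1; 0; 4; 3; 4; 2; 1; 0; 1; 3; 4; 3; 0; 1; 0; 4; 3; 4; 2; 1; 0; 1; 3; 2; 3; 0; 1; 0; 4; 2; 4; 2; 1; 0; 1; 3; 4; 2; 0; 1; 0; 4; 2; 3; 2; 1; 0; 4; 3; 4; 2; 0; 2; 0; 3; 2; 3].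
Definition s6 : seq nat := [:: 0; 3; 5; 0; 3; 2; 3; 1; 0; 4; 2; 3; 1; 5; 3; 4; 5; 4; 1; 3; 1; 0; 4; 2; 5; 2; 0; 4; 2; 4; 1; 0; 4; 2; 5; 1; 0; 5; 0; 4; 2; 3; 1; 0; 4; 2; 3; 1; 5; 3; 4; 3; 1; 0; 3; 2; 3; 1; 5; 3; 0; 5; 4; 2; 3; 1; 0; 4; 2; 5; 1; 0; 4; 0; 4; 1; 5; 4; 2; 5; 1; 0; 5; 0; 4; 2; 3; 1; 0; 4; 2; 3; 1; 5; 3; 4; 5; 3; 1; 3; 2; 4; 2; 5; 1; 0; 5; 4; 2; 3; 1; 0; 4; 2; 5; 1; 0; 5; 0; 4; 2; 3; 1; 0; 4; 1; 3; 5; 0; 3; 2; 3; 1; 0; 4; 2; 3; 1; 5; 3; 0; 5; 4; 2; 3; 1; 0; 4; 2; 5; 2; 5; 4; 2; 4; 1; 5; 4; 2; 5; 1; 0; 5; 0; 4; 2; 3; 1; 0; 4; 2; 3; 1; 5; 3; 4; 3; 1; 0; 3; 2; 3; 1; 5; 3; 0; 5; 4; 2; 3; 1; 0; 4; 2; 5; 1; 0; 4; 0; 4; 1; 5; 4; 2; 5; 1; 0; 5; 0; 4; 2; 3; 1; 0; 4; 2; 3; 1; 5; 3; 0; 5; 3; 1; 3; 2; 4; 2; 5; 4; 0; 5; 4; 2; 3; 1; 5; 4; 2; 5; 1; 0; 5; 0; 4; 2; 3; 1; 0; 4; 1; 3; 1; 0; 3; 2; 3; 1; 0; 4; 5; 3;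 1; 5; 3; 0; 5; 4; 2; 3; 1; 0; 4; 2; 5; 2; 0; 4; 2; 4; 1; 5; 4; 2; 5; 2; 0; 5; 0; 4; 2; 3; 1; 0; 4; 2; 3; 1; 5; 3; 0; 3; 1; 0; 3; 2; 3; 2; 5; 3; 1; 5; 4; 2; 3; 1; 5; 4; 2; 5; 1; 0; 4; 0; 4; 1; 0; 4; 2; 5; 1; 0; 1; 0].
Definition col5 (a : nat) : 'I_5 := Ordinal (ltn_pmod (nth 0 s5 a) (isT : 0 < 5)).
Definition col6 (a : nat) : 'I_6 := Ordinal (ltn_pmod (nth 0 s6 a) (isT : 0 < 6)).

Theorem mainTheorem6 :
  (exists col : nat -> 'I_5, ~ has_mono_square 180 col) /\
  (exists col : nat -> 'I_6, ~ has_mono_square 333 col).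
Proof.
split.
- exists col5; apply: (@crit 5 180 14) => //; vm_compute; reflexivity.
- exists col6; apply: (@crit 6 333 19) => //; vm_compute; reflexivity.
Qed.
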